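(* Let $\mathbf G=(G,\le,\cdot,/,0,1)$ be a left-residuated po-groupoid whose multiplication is commutative ($x\cdot y=y\cdot x$ for all $x,y$). Then $\mathbf G$ satisfies $x\cdot y=\neg(\neg x/y)$ for all $x,y\in G$ if and only if it satisfies the contraposition law $x/y=\neg y/\neg x$ for all $x,y\in G$.
   Context: A (bounded integral) left-residuated po-groupoid is a structure $\mathbf G=(G,\le,\cdot,/,0,1)$ where $(G,\le,0,1)$ is a bounded poset with least element $0$ and greatest element $1$, $\cdot$ is a binary operation on $G$ with $1\cdot x=x\cdot 1=x$ for all $x$, and $/$ is a binary operation on $G$ satisfying the left residuation law: for all $x,y,z\in G$, $x\cdot y\le z\iff x\le z/y$. The negation is $\neg x:=0/x$. *)

(* Defs.v *)
Set Implicit Arguments.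

Record LRPoGroupoid := {
  carrier :> Type;
  le : carrier -> carrier -> Prop;
  mul : carrier -> carrier -> carrier;
  rdiv : carrier -> carrier -> carrier;
  zero : carrier;
  one : carrier;
  le_refl : forall x, le x x;
  le_antisym : forall x y, le x y -> le y x -> x = y;
  le_trans : forall x y z, le x y -> le y z -> le x z;
  zero_least : forall x, le zero x;
  one_greatest : forall x, le x one;
  mul_one_l : forall x, mul one x = x;
  mul_one_r : forall x, mul x one = x;
  residuation : forall x y z, le (mul x y) z <-> le x (rdiv z y)
}.

Definition neg (G : LRPoGroupoid) (x : G) : G := rdiv G (zero G) x.

(* Main.v *)
Require Import Defs.

Section S.
Variable G : LRPoGroupoid.
Hypothesis Hcomm : forall x y : G, mul G x y = mul G y x.

Lemma ext (u v : G) : (forall a, le G a u <-> le G a v) -> u = v.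
Proof. intro H. apply le_antisym; [apply H, le_refl | apply H, le_refl]. Qed.

Lemma gal (a b : G) : le G a (neg G b) -> le G b (neg G a).
Proof. unfold neg; intro H. apply residuation in H. apply residuation.
  rewrite Hcomm; exact H. Qed.

Lemma div1 (y : G) : rdiv G y (one G) = y.
Proof. apply ext; intro a. split; intro Ha.
  - apply residuation in Ha. rewrite mul_one_r in Ha. exact Ha.
  - apply residuation. rewrite mul_one_r. exact Ha. Qed.

Lemma neg1 : neg G (one G) = zero G.
Proof. apply div1. Qed.
End S.

Theorem mainTheorem10 (G : LRPoGroupoid)
  (Hcomm : forall x y : G, mul G x y = mul G y x) :
  (forall x y : G, mul G x y = neg G (rdiv G (neg G x) y)) <->
  (forall x y : G, rdiv G x y = rdiv G (neg G y) (neg G x)).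
Proof.
  split; intro H.
  - assert (NN : forall y : G, neg G (neg G y) = y).
    { intro y. pose proof (H (one G) y) as E. rewrite mul_one_l in E.
      rewrite (neg1 G) in E. change (y = neg G (neg G y)) in E. symmetry; exact E. }
    assert (K : forall x y : G, rdiv G (neg G x) y = neg G (mul G x y)).
    { intros x y. rewrite H, NN. reflexivity. }
    intros x y. pose proof (K (neg G x) y) as K1. rewrite NN in K1.
    rewrite K1, Hcomm, <- K. reflexivity.
  - assert (NN : forall y : G, neg G (neg G y) = y).
    { intro y. pose proof (H y (one G)) as E. rewrite div1 in E.
      rewrite (neg1 G) in E. symmetry; exact E. }
    intros x y. rewrite <- (NN (mul G x y)). f_equal.
    apply ext; intro a. split; intro Ha.
    + apply gal in Ha; auto. apply (proj1 (residuation _ _ _ _)) in Ha.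
      rewrite (H (neg G a) y), NN in Ha.
      apply (proj2 (residuation _ _ _ _)) in Ha. rewrite Hcomm in Ha.
      apply (proj1 (residuation _ _ _ _)) in Ha.
      rewrite (H (neg G x) y), NN. exact Ha.
    + rewrite (H (neg G x) y), NN in Ha. apply (proj2 (residuation _ _ _ _)) in Ha.
      rewrite Hcomm in Ha.
      apply (proj1 (residuation _ _ _ _)) in Ha. rewrite <- (NN a) in Ha.
      rewrite <- (H (neg G a) y) in Ha.
      apply (proj2 (residuation _ _ _ _)) in Ha. apply gal; auto.
Qed.
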